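(* Let $\mathcal{C}_1$ be an $[n,k_1,d_1]_2$ binary linear code that is even-like, let $\mathcal{C}_2$ be the $[n,1,n]_2$ repetition code generated by the all-ones vector $\mathbf{1}_n$, and let $\mathcal{C}=\{(\mathbf{u},\mathbf{u}+\mathbf{v}):\ \mathbf{u}\in\mathcal{C}_1,\ \mathbf{v}\in\mathcal{C}_2\}$. Then $\mathcal{C}$ is a $[2n,k_1+1,\min\{2d_1,n\}]_2$ code with $\dim(\mathrm{Hull}_E(\mathcal{C}))=k_1$ if $n$ is odd and $\dim(\mathrm{Hull}_E(\mathcal{C}))=k_1+1$ if $n$ is even.
   Context: A vector $\mathbf{x}\in\mathbb{F}_2^n$ is even-like if $\sum_i x_i=0$ and odd-like otherwise; a binary code is even-like if all its codewords are even-like, and odd-like otherwise. $\mathrm{Hull}_E(\mathcal{C})=\mathcal{C}\cap\mathcal{C}^{\perp_E}$ where $\mathcal{C}^{\perp_E}$ is the dual with respect to $(\mathbf{x},\mathbf{y})_E=\sum_ix_iy_i$. An $[n,k,d]_2$ code is a $k$-dimensional subspace of $\mathbb{F}_2^n$ with minimum distance $d$. *)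

(* Defs.v *)
From HB Require Import structures.
From mathcomp Require Import all_boot all_order all_algebra.
Set Implicit Arguments. Unset Strict Implicit. Unset Printing Implicit Defensive.
Import Order.TTheory GRing.Theory.
Local Open Scope ring_scope.

Notation vecF2 n := 'rV['F_2]_n.

Definition edot n (x y : vecF2 n) : 'F_2 := \sum_(i < n) x 0 i * y 0 i.

Definition wt n (x : vecF2 n) : nat := #|[set i : 'I_n | x 0 i != 0]|.

(* d is the minimum distance (= minimum nonzero weight) of the linear code C *)
Definition is_min_dist n (C : {vspace vecF2 n}) (d : nat) : Prop :=
  (exists2 c, c \in C & (c != 0) && (wt c == d)%N) /\
  (forall c, c \in C -> c != 0 -> (d <= wt c)%N).

Definition even_like_vec n (x : vecF2 n) : bool := \sum_(i < n) x 0 i == 0.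
Definition even_like n (C : {vspace vecF2 n}) : Prop :=
  forall c, c \in C -> even_like_vec c.

Definition ones n : vecF2 n := const_mx 1.
Definition rep_code n : {vspace vecF2 n} := <[ones n]>%VS.

(* Euclidean dual: the subspace spanned by (= equal to) the set of all x
   orthogonal to every codeword of C *)
Definition dualE n (C : {vspace vecF2 n}) : {vspace vecF2 n} :=
  <<[seq x <- enum [set: vecF2 n] |
     [forall y : vecF2 n, (y \in C) ==> (edot x y == 0%R)]]>>%VS.

Definition hullE n (C : {vspace vecF2 n}) : {vspace vecF2 n} :=
  (C :&: dualE C)%VS.

(* The (u | u+v) construction: the subspace spanned by (= equal to) the set
   {(u, u+v) : u in C1, v in C2} *)
Definition uuv n (C1 C2 : {vspace vecF2 n}) : {vspace vecF2 (n + n)} :=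
  <<[seq row_mx u (u + v) |
      u <- [seq x <- enum [set: vecF2 n] | x \in C1],
      v <- [seq x <- enum [set: vecF2 n] | x \in C2]]>>%VS.

(* Main.v *)
Require Import Defs.
From HB Require Import structures.
From mathcomp Require Import all_boot all_order all_algebra all_field.
Set Implicit Arguments. Unset Strict Implicit. Unset Printing Implicit Defensive.
Import GRing.Theory.
Local Open Scope ring_scope.

Lemma F2_cases (x : 'F_2) : x = 0 \/ x = 1.
Proof. by case: x => [[|[|]]] //= H; [left|right]; apply: val_inj. Qed.

Lemma wtE n (x : vecF2 n) : wt x = (\sum_(i < n) (x 0%R i != 0%R))%N.
Proof.
rewrite /wt -sum1_card big_mkcond /=; apply: eq_bigr => i _; rewrite inE.
by case: (_ != _).
Qed.

Lemma wt_row_mx n m (a : vecF2 n) (b : vecF2 m) : wt (row_mx a b) = (wt a + wt b)%N.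
Proof.
by rewrite !wtE big_split_ord /=; congr (_ + _)%N; apply: eq_bigr => i _;
  rewrite ?row_mxEl ?row_mxEr.
Qed.

Lemma wt_ones n (u : vecF2 n) : (wt u + wt (u + ones n))%N = n.
Proof.
rewrite !wtE -big_split /= -[n in RHS]card_ord -sum1_card; apply: eq_bigr => i _.
rewrite !mxE; by case: (F2_cases (u 0 i)) => ->.
Qed.

Lemma edot_row_mx n m (a c : vecF2 n) (b d : vecF2 m) :
  edot (row_mx a b) (row_mx c d) = edot a c + edot b d.
Proof. by rewrite /edot big_split_ord /=; congr (_ + _); apply: eq_bigr => i _;
  rewrite ?row_mxEl ?row_mxEr. Qed.

Lemma edotDl n (a b c : vecF2 n) : edot (a + b) c = edot a c + edot b c.
Proof. by rewrite /edot -big_split; apply: eq_bigr => i _; rewrite mxE mulrDl. Qed.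

Lemma edotZl n k (a c : vecF2 n) : edot (k *: a) c = k * edot a c.
Proof. by rewrite /edot mulr_sumr; apply: eq_bigr => i _; rewrite mxE mulrA. Qed.

Lemma edotC n (a c : vecF2 n) : edot a c = edot c a.
Proof. by rewrite /edot; apply: eq_bigr => i _; rewrite mulrC. Qed.

Lemma edot_ones n (a : vecF2 n) : edot a (ones n) = \sum_(i < n) a 0 i.
Proof. by rewrite /edot; apply: eq_bigr => i _; rewrite mxE mulr1. Qed.

Lemma edot_ones_ones n : edot (ones n) (ones n) = n%:R.
Proof. by rewrite edot_ones /edot; under eq_bigr do rewrite mxE; rewrite sumr_const card_ord. Qed.

Lemma F2_2 (x : 'F_2) : x + x = 0.
Proof. case: (F2_cases x) => ->. by rewrite addr0. by apply: val_inj. Qed.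

Lemma F2_nat n : (n%:R : 'F_2) = (odd n)%:R.
Proof.
elim: n => [|n IH]; first by [].
rewrite mulrS IH /=.
by case: (odd n) => //=; apply: val_inj.
Qed.

Lemma nz_idx n (c : vecF2 n) : c != 0 -> exists i, c 0 i != 0.
Proof.
move=> nz; apply/existsP; apply: contraR nz; rewrite negb_exists => /forallP H.
apply/eqP/rowP => i; rewrite mxE; apply/eqP; move: (H i); by rewrite negbK.
Qed.

Lemma span_closed (K : fieldType) (vT : vectType K) (P : pred vT) (X : seq vT) :
  P 0 -> (forall k x y, P x -> P y -> P (k *: x + y)) -> all P X ->
  forall x, x \in <<X>>%VS -> P x.
Proof.
move=> P0 Pc; elim: X => [|v X IH] /=.
  by move=> _ x; rewrite span_nil memv0 => /eqP ->.
case/andP=> Pv PX x; rewrite span_cons => /memv_addP [a /vlineP [k ->] [b Hb ->]].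
by apply: Pc => //; apply: IH.
Qed.

Lemma mem_uuv n (C1 : {vspace vecF2 n}) x :
  reflect (exists u b, u \in C1 /\ x = row_mx u (u + b *: ones n))
    (x \in uuv C1 (rep_code n)).
Proof.
apply: (iffP idP).
  move=> Hx.
  pose P := [pred x : vecF2 (n + n) | [exists u : vecF2 n, exists b : 'F_2,
     (u \in C1) && (x == row_mx u (u + b *: ones n))]].
  suff /existsP [u /existsP [b /andP [Hu /eqP ->]]] : P x by exists u, b.
  apply: (span_closed _ _ _ Hx).
  - apply/existsP; exists 0; apply/existsP; exists 0.
    by rewrite mem0v /= (scale0r (ones n)) addr0 row_mx0.
  - move=> k y z /existsP [u /existsP [b /andP [Hu /eqP ->]]].
    move=> /existsP [u' /existsP [b' /andP [Hu' /eqP ->]]].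
    apply/existsP; exists (k *: u + u'); apply/existsP; exists (k * b + b').
    rewrite memvD ?memvZ //= scale_row_mx add_row_mx; apply/eqP; congr row_mx.
    by rewrite scalerDr scalerDl scalerA addrACA.
  - apply/allP => y /allpairsP [[u v] /= [Hu Hv ->]].
    move: Hu Hv; rewrite !mem_filter => /andP [Hu _] /andP [/vlineP [b ->] _].
    by apply/existsP; exists u; apply/existsP; exists b; rewrite Hu eqxx.
move=> [u [b [Hu ->]]]; apply: memv_span; apply/allpairsP; exists (u, b *: ones n).
have hE : forall y : vecF2 n, y \in Finite.enum (vecF2 n) by move=> y; rewrite -enumT mem_enum.
by rewrite /= !mem_filter !inE !hE Hu memvZ ?memv_line.
Qed.

Lemma mem_dualE m (C : {vspace vecF2 m}) x :
  reflect (forall y, y \in C -> edot x y = 0) (x \in dualE C).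
Proof.
apply: (iffP idP).
  move=> Hx.
  pose P := [pred x : vecF2 m | [forall y : vecF2 m, (y \in C) ==> (edot x y == 0)]].
  suff /forallP H : P x by move=> y Hy; apply/eqP; move: (H y); rewrite Hy.
  apply: (span_closed _ _ _ Hx).
  - by apply/forallP => y; apply/implyP => _; rewrite /edot big1 // => i _; rewrite mxE mul0r.
  - move=> k y z /forallP Hy /forallP Hz; apply/forallP => w; apply/implyP => Hw.
    move/implyP: (Hy w) => /(_ Hw) /eqP Hyw; move/implyP: (Hz w) => /(_ Hw) /eqP Hzw.
    by rewrite edotDl edotZl Hyw Hzw mulr0 addr0.
  - by apply/allP => y; rewrite mem_filter => /andP [].
move=> H; apply: memv_span; rewrite mem_filter mem_enum inE andbT.
by apply/forallP => y; apply/implyP => Hy; rewrite H.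
Qed.

Lemma edotDr n (a b c : vecF2 n) : edot c (a + b) = edot c a + edot c b.
Proof. by rewrite edotC edotDl !(edotC c). Qed.

Lemma edotZr n k (a c : vecF2 n) : edot c (k *: a) = k * edot c a.
Proof. by rewrite edotC edotZl (edotC c). Qed.

Lemma wt0 n : wt (0 : vecF2 n) = 0%N.
Proof. by rewrite wtE big1 // => i _; rewrite mxE eqxx. Qed.

Lemma edot_f n (u u' : vecF2 n) b b' :
  even_like_vec u -> even_like_vec u' ->
  edot (row_mx u (u + b *: ones n)) (row_mx u' (u' + b' *: ones n)) = b * b' * n%:R.
Proof.
rewrite /even_like_vec => /eqP Hu /eqP Hu'.
rewrite edot_row_mx edotDl !edotDr !edotZl !edotZr edot_ones (edotC (ones n) u') edot_ones.
by rewrite edot_ones_ones Hu Hu' !mulr0 !addr0 add0r addrA F2_2 add0r mulrA.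
Qed.

Lemma card_F2 : #|'F_2| = 2%N.
Proof. by rewrite card_Fp. Qed.

Lemma dimF2 n (V : {vspace vecF2 n}) : #|V| = (2 ^ \dim V)%N.
Proof. by rewrite card_vspace card_F2. Qed.

Theorem theorem3 (n k1 d1 : nat) (C1 : {vspace vecF2 n}) :
  \dim C1 = k1 -> is_min_dist C1 d1 -> even_like C1 ->
  let C := uuv C1 (rep_code n) in
  [/\ \dim C = (k1 + 1)%N,
      is_min_dist C (minn (2 * d1) n) &
      \dim (hullE C) = (if odd n then k1 else k1 + 1)%N].
Proof.
move=> dimC1 [[c Hc /andP [cnz /eqP wtc]] Hmin] Hev C.
have [i0 _] := nz_idx cnz.
pose f (p : vecF2 n * 'F_2) : vecF2 (n + n) := row_mx p.1 (p.1 + p.2 *: ones n).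
have finj : injective f.
  move=> [u b] [u' b'] /eq_row_mx [/= Eu]; rewrite Eu => /addrI /rowP /(_ i0).
  by rewrite !mxE !mulr1 => ->.
pose S := [set u : vecF2 n | u \in C1].
have cardS : #|S| = (2 ^ k1)%N by rewrite cardsE dimF2 dimC1.
have memC : forall x, x \in C = (x \in f @: setX S [set: 'F_2]).
  move=> x; apply/mem_uuv/imsetP.
    by move=> [u [b [Hu ->]]]; exists (u, b); rewrite // !inE Hu.
  by move=> [[u b]]; rewrite !inE /= andbT => Hu ->; exists u, b.
have dimC : \dim C = (k1 + 1)%N.
  apply/eqP; rewrite -(@eqn_exp2l 2) // -dimF2 (eq_card memC) card_imset //.
  by rewrite cardsX cardS cardsT card_F2 expnD.
split => //.
-
  have n0 : (0 < n)%N := leq_ltn_trans (leq0n i0) (ltn_ord i0).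
  split.
    case: (leqP (2 * d1) n) => H.
      exists (f (c, 0)).
        by rewrite memC; apply: imset_f; rewrite !inE Hc.
      have -> : wt (f (c, 0)) = (2 * d1)%N.
        by rewrite /f /= (scale0r (ones n)) addr0 wt_row_mx wtc mul2n addnn.
      rewrite eqxx andbT.
      apply: contra cnz => /eqP E; apply/eqP.
      apply/rowP => i; move/rowP: E => /(_ (lshift n i)); by rewrite /f /= row_mxEl !mxE.
    exists (f (0, 1)).
      by rewrite memC; apply: imset_f; rewrite !inE mem0v.
    have Ew : wt (f (0, 1)) = n.
      by rewrite /f /= (scale1r (ones n)) wt_row_mx wt_ones.
    rewrite Ew eqxx andbT.
    apply/eqP => E; move: Ew; rewrite E wt0 => E0.
    by rewrite -E0 in n0.
  move=> x; rewrite memC => /imsetP [[u b]]; rewrite !inE /= andbT => Hu -> fnz.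
  case: (F2_cases b) => Eb; subst b.
    rewrite /f /= (scale0r (ones n)) addr0 wt_row_mx.
    have unz : u != 0.
      apply: contra fnz => /eqP Eu; apply/eqP.
      by rewrite /f /= Eu (scale0r (ones n)) addr0 row_mx0.
    have := Hmin u Hu unz => Hd.
    apply: leq_trans (geq_minl _ _) _; rewrite mul2n -addnn; exact: leq_add.
  by rewrite /f /= (scale1r (ones n)) wt_row_mx wt_ones geq_minr.
-
  pose B : {set 'F_2} := if odd n then [set 0] else setT.
  have memH : forall x, x \in hullE C = (x \in f @: setX S B).
    move=> x; rewrite memv_cap memC; apply/andP/imsetP.
      move=> [/imsetP [[u b]]]; rewrite !inE /= andbT => Hu Ex /mem_dualE Hd.
      exists (u, b) => //; rewrite !inE Hu /= /B.
      have := Hd (f (0, 1)); rewrite memC imset_f ?inE ?mem0v // => /(_ isT).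
      rewrite Ex /f /= edot_f ?Hev // ?/even_like_vec; last first.
        by rewrite mem0v.
      rewrite mulr1 F2_nat; case: (odd n) => /= E.
        by rewrite inE; move: E; rewrite mulr1 => ->.
      by rewrite inE.
    move=> [[u b]]; rewrite !inE /= => /andP [Hu Hb] ->; split.
      by apply: imset_f; rewrite !inE Hu.
    apply/mem_dualE => y; rewrite memC => /imsetP [[u' b']]; rewrite !inE /= andbT.
    move=> Hu' ->; rewrite /f /= edot_f ?Hev // F2_nat.
    move: Hb; rewrite /B; case: (odd n) => /=; last by rewrite mulr0.
    by rewrite inE => /eqP ->; rewrite !mul0r.
  apply/eqP; rewrite -(@eqn_exp2l 2) // -dimF2 (eq_card memH) card_imset //.
  rewrite cardsX cardS /B; case: (odd n).
    by rewrite cards1 muln1.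
  by rewrite cardsT card_F2 expnD.
Qed.
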